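(* Fix $n\ge1$ and a real number $\kappa>0$. Let $\ell_1,\dots,\ell_m\in\{1,\dots,n\}$ ($m\ge 0$) and put $U=A^{(\ell_1)}\odot\cdots\odot A^{(\ell_m)}$ (with $U=E$ if $m=0$), $U=(u_{i,j})$. Then for all $1\le i\le j\le n$, $$u_{i,j}=\kappa\cdot N_{i,j},$$ where $N_{i,j}$ is the maximal length of a nondecreasing subsequence of $[\ell_1,\dots,\ell_m]$ all of whose terms lie in $\{i,i+1,\dots,j\}$ (with $N_{i,j}=0$ if there is none); and $u_{i,j}=-\infty$ for $i>j$.
   Context: Tropical (max-plus) semiring: $\mathbb T=\mathbb R\cup\{-\infty\}$ with $a\oplus b=\max(a,b)$, $a\odot b=a+b$; tropical matrix product $(A\odot B)_{i,j}=\max_t(a_{i,t}+b_{t,j})$, tropical matrix sum is entrywise max. For $\ell\in\{1,\dots,n\}$, $A^{(\ell)}$ is the $n\times n$ tropical matrix with $A^{(\ell)}_{i,j}=\kappa$ if $i\le\ell\le j$, $A^{(\ell)}_{i,j}=0$ if $i\le j$ but not $i\le \ell\le j$, and $A^{(\ell)}_{i,j}=-\infty$ if $i>j$. $E$ is the $n\times n$ matrix with $E_{i,j}=0$ for $i\le j$ and $-\infty$ for $i>j$. Subsequences are taken by positions. *)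

(* Defs.v *)
(* Tropical (max-plus) semiring over a real ordered domain R,
   represented as option R with None = -infinity. *)
From HB Require Import structures.
From mathcomp Require Import all_boot all_order all_algebra.
Set Implicit Arguments. Unset Strict Implicit. Unset Printing Implicit Defensive.
Import Order.TTheory GRing.Theory Num.Theory.
Local Open Scope ring_scope.

Section Trop.
Variable R : realDomainType.

Definition tadd (a b : option R) : option R :=
  match a, b with
  | None, x => x
  | x, None => x
  | Some x, Some y => Some (Num.max x y)
  end.

Definition tmul (a b : option R) : option R :=
  match a, b with
  | Some x, Some y => Some (x + y)
  | _, _ => None
  end.

Variable n : nat.

(* n x n tropical matrices, indices 1..n encoded as 'I_n (index k+1 <-> ordinal k) *)
Definition tmx := 'I_n -> 'I_n -> option R.

Definition tmatmul (A B : tmx) : tmx :=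
  fun i j => \big[tadd/None]_(t < n) tmul (A i t) (B t j).

Definition Emx : tmx := fun i j => if (i <= j)%N then Some 0 else None.

Definition Amx (kappa : R) (l : 'I_n) : tmx :=
  fun i j => if (i <= j)%N then
               (if (i <= l <= j)%N then Some kappa else Some 0)
             else None.

Fixpoint Uprod (kappa : R) (ls : seq 'I_n) : tmx :=
  match ls with
  | [::] => Emx
  | [:: a] => Amx kappa a
  | a :: s => tmatmul (Amx kappa a) (Uprod kappa s)
  end.
End Trop.

(* N_{i,j}: maximal length of a (position-)subsequence of ls that is
   nondecreasing and has all terms in {i,...,j}; 0 if none. Subsequences
   by positions are exactly the masks of ls. *)
Definition Nij (n : nat) (ls : seq 'I_n) (i j : 'I_n) : nat :=
  \max_(b : (size ls).-tuple bool |
          sorted (fun x y : 'I_n => (x <= y)%N) (mask b ls)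
          && all (fun x : 'I_n => (i <= x <= j)%N) (mask b ls))
     size (mask b ls).

(* Main.v *)
Require Import Defs.
From HB Require Import structures.
From mathcomp Require Import all_boot all_order all_algebra.
Import Order.TTheory GRing.Theory Num.Theory.
Local Open Scope ring_scope.

Section S.
Variable n : nat.
Implicit Types (i j t a : 'I_n) (w s : seq 'I_n).

Definition good i j w := sorted (fun x y : 'I_n => (x <= y)%N) w
   && all (fun x : 'I_n => (i <= x <= j)%N) w.

Lemma Nij_ub s i j w : subseq w s -> good i j w -> (size w <= Nij s i j)%N.
Proof.
case/subseqP=> m sz ->{w} g.
have szt : size m == size s by apply/eqP.
exact: (leq_bigmax_cond (Tuple szt)).
Qed.

Lemma Nij_ex s i j : exists w, [/\ subseq w s, good i j w & size w = Nij s i j].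
Proof.
rewrite /Nij.
apply: (big_ind (fun x => exists w, [/\ subseq w s, good i j w & size w = x])).
- by exists [::]; rewrite sub0seq.
- move=> x y [w1 [h1 h2 h3]] [w2 [h4 h5 h6]].
  case: (leqP x y) => h.
  + by exists w2; split => //; rewrite h6; apply/esym/maxn_idPr.
  + by exists w1; split => //; rewrite h3; apply/esym/maxn_idPl/ltnW.
- move=> b Pb; exists (mask b s); split => //; exact: mask_subseq.
Qed.

Lemma Nij_eq s i j m :
  (exists w, [/\ subseq w s, good i j w & size w = m]) ->
  (forall w, subseq w s -> good i j w -> (size w <= m)%N) -> Nij s i j = m.
Proof.
move=> [w [h1 h2 h3]] hb; apply/eqP; rewrite eqn_leq; apply/andP; split.
- by have [w' [a b <-]] := Nij_ex s i j; exact: hb.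
- by rewrite -h3; exact: Nij_ub.
Qed.

Lemma ltrans : transitive (fun x y : 'I_n => (x <= y)%N).
Proof. by move=> y x z; apply: leq_trans. Qed.

Lemma good_cons i j a w : good i j (a :: w) = [&& (i <= a <= j)%N, good a j w & good i j w].
Proof.
rewrite /good /=.
case ha: (i <= a <= j)%N => /=; last by rewrite andbF.
apply/idP/idP.
- move=> /andP [p al].
  have st := path_sorted p.
  have am := order_path_min ltrans p.
  rewrite st al /= andbT.
  apply/allP => x xw. rewrite (allP am x xw) /=.
  by case/andP: (allP al x xw).
- case/andP => /andP [st al1] /andP [_ al2].
  rewrite al2 andbT.
  case: w st al1 {al2} => //= b w' st /andP [/andP [-> _] _].
  by [].
Qed.

Lemma good_weak i i' j w : (i <= i')%N -> good i' j w -> good i j w.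
Proof.
move=> h /andP [st al]; rewrite /good st /=.
apply/allP => x xw; case/andP: (allP al x xw) => h1 ->.
by rewrite (leq_trans h h1).
Qed.

Arguments good_weak {i i' j w}.

Lemma Nij_nil i j : Nij [::] i j = 0%N.
Proof.
apply: Nij_eq; first by exists [::].
by move=> w; rewrite subseq0 => /eqP ->.
Qed.

Lemma Nij_rec a s i j : (i <= j)%N ->
  Nij (a :: s) i j = \max_(t : 'I_n | (i <= t <= j)%N) ((i <= a <= t)%N + Nij s t j)%N.
Proof.
move=> hij; apply/eqP; rewrite eqn_leq; apply/andP; split.
- have [w [sw gw <-]] := Nij_ex (a :: s) i j.
  case: w sw gw => [|b w'] sw gw; first by [].
  move: sw; rewrite [subseq _ _]/=.
  case: (b =P a) => [eba sw | _ sw]; first subst b.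
  + move: gw; rewrite good_cons => /and3P [ha g1 _].
    apply: leq_trans (leq_bigmax_cond a _); last first.
      by case/andP: ha => ha1 ha2; rewrite ha1 ha2.
    case/andP: ha => ha1 ha2. rewrite ha1 leqnn /= add1n ltnS.
    exact: Nij_ub.
  + apply: leq_trans (leq_bigmax_cond i _); last by rewrite leqnn hij.
    apply: leq_trans (leq_addl _ _).
    exact: Nij_ub.
- apply/bigmax_leqP => t /andP [h1 h2].
  have [w [sw gw <-]] := Nij_ex s t j.
  case ha: (i <= a <= t)%N.
  + rewrite add1n; have H := @Nij_ub (a :: s) i j (a :: w); apply: H.
      by rewrite /= eqxx.
    case/andP: ha => ia at_.
    by rewrite good_cons ia (leq_trans at_ h2) (good_weak at_ gw) (good_weak h1 gw).
  + rewrite add0n; apply: Nij_ub.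
      exact: (subseq_trans sw (subseq_cons s a)).
    exact: good_weak h1 gw.
Qed.

Lemma Nij_single a i j : Nij [:: a] i j = (i <= a <= j)%N.
Proof.
apply: Nij_eq.
- case h: (i <= a <= j)%N.
  + by exists [:: a]; rewrite /= eqxx /good /= h.
  + by exists [::]; rewrite sub0seq.
- move=> w sw g; case: w sw g => [|b [|c w]] sw g //=.
  + have : b \in [:: a] by apply: (mem_subseq sw); rewrite mem_seq1.
    rewrite mem_seq1 => /eqP eb; subst b.
    by move: g; rewrite /good /= andbT => ->.
  + by have := size_subseq sw.
Qed.

End S.

Section T.
Variables (R : realDomainType) (n : nat) (kappa : R).
Hypothesis hk : 0 < kappa.

Lemma tadd_none (x y : option R) : tadd x y = None -> x = None /\ y = None.
Proof. by case: x; case: y. Qed.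

Lemma tbig_none (r : seq 'I_n) (P : pred 'I_n) (F : 'I_n -> option R) :
  \big[@tadd R/None]_(t <- r | P t) F t = None -> forall t, t \in r -> P t -> F t = None.
Proof.
elim: r => [|x r IH] //; rewrite big_cons => h t.
rewrite in_cons => /orP [/eqP -> | tr] Pt.
- by move: h; rewrite Pt => /tadd_none [].
- apply: IH => //; move: h; case: (P x) => // /tadd_none [] //.
Qed.

Arguments tbig_none {r P F}.

Lemma maxkey (a b : nat) : Num.max (kappa * a%:R) (kappa * b%:R) = kappa * (maxn a b)%:R.
Proof.
case: (leqP a b) => h.
- rewrite max_r //. by rewrite ler_pM2l // ler_nat.
- rewrite max_l //. by rewrite ler_pM2l // ler_nat ltnW.
Qed.

Lemma tbig (f : 'I_n -> option R) (P : pred 'I_n) (g : 'I_n -> nat) (t0 : 'I_n) :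
  (forall t, f t = if P t then Some (kappa * (g t)%:R) else None) -> P t0 ->
  \big[@tadd R/None]_t f t = Some (kappa * (\max_(t | P t) g t)%:R).
Proof.
move=> hf Pt0.
have e : \big[@tadd R/None]_t f t = \big[@tadd R/None]_(t | P t) Some (kappa * (g t)%:R).
  elim: (index_enum _) => [|x r IHr]; first by rewrite !big_nil.
  rewrite !big_cons IHr hf; by case: (P x).
rewrite e.
have : (fun x y => (x = None /\ y = 0%N) \/ x = Some (kappa * y%:R))
   (\big[@tadd R/None]_(t | P t) Some (kappa * (g t)%:R)) (\max_(t | P t) g t).
  apply: (big_ind2 (fun x y => (x = None /\ y = 0%N) \/ x = Some (kappa * y%:R))).
  - by left.
  - move=> x1 x2 y1 y2 [[-> ->]|->] [[-> ->]|->]; rewrite ?max0n ?maxn0 /=.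
    + by left.
    + by right.
    + by right.
    + by right; rewrite maxkey.
  - by move=> t _; right.
case=> [[h _]|//].
by have := tbig_none h t0 (mem_index_enum t0) Pt0.
Qed.

Lemma Uprod_eq (ls : seq 'I_n) : forall i j : 'I_n,
  Uprod kappa ls i j = if (i <= j)%N then Some (kappa * (Nij ls i j)%:R) else None.
Proof.
elim: ls => [|a s IH] i j.
  by rewrite /= /Emx Nij_nil mulr0.
case: s IH => [|b s'] IH.
  rewrite /= /Amx Nij_single.
  by case: (i <= j)%N => //; case: (i <= a <= j)%N; rewrite ?mulr1 ?mulr0.
set s := b :: s' in IH *.
change (tmatmul (Amx kappa a) (Uprod kappa s) i j =
  (if (i <= j)%N then Some (kappa * (Nij (a :: s) i j)%:R) else None)).
rewrite /tmatmul.
case: (leqP i j) => hij.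
- rewrite Nij_rec //.
  apply: (@tbig _ _ _ i); last by rewrite leqnn hij.
  move=> t; rewrite IH /Amx.
  case: (leqP i t) => hit /=; last by [].
  case: (leqP t j) => htj /=; last by case: ifP.
  case: (i <= a <= t)%N => /=.
  + by rewrite natrD mulrDr mulr1.
  + by rewrite add0n add0r.
- apply: (big_ind (fun x => x = None)) => //; first by move=> x y -> ->.
  move=> t _; rewrite IH /Amx.
  case: (leqP i t) => hit //=.
  have -> : (t <= j)%N = false by apply/negbTE; rewrite -ltnNge (leq_trans hij hit).
  by case: ifP.
Qed.

End T.

Theorem mainTheorem5 (R : realDomainType) (n : nat) (hn : (0 < n)%N)
    (kappa : R) (hk : 0 < kappa) (ls : seq 'I_n) :
  forall i j : 'I_n,
    ((i <= j)%N -> Uprod kappa ls i j = Some (kappa * (Nij ls i j)%:R)) /\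
    ((j < i)%N -> Uprod kappa ls i j = None).
Proof.
move=> i j; rewrite Uprod_eq //; split => h.
- by rewrite h.
- by rewrite leqNgt h.
Qed.
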